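(* In the setting described in the context, the map $\alpha\colon\Gamma\times\Gamma\to\mathrm M_{\mathcal U}$, $\alpha(g,h)=c(g,h)\varphi_{\mathcal U}(gh)^*$, is a $2$-cocycle with respect to the isometric action $\pi(g)T=\varphi_{\mathcal U}(g)T\varphi_{\mathcal U}(g)^*$ of $\Gamma$ on $\mathrm M_{\mathcal U}$, i.e. $\pi(g)\alpha(h,k)-\alpha(gh,k)+\alpha(g,hk)-\alpha(g,h)=0$ for all $g,h,k\in\Gamma$.
   Context: Fix a non-principal ultrafilter $\mathcal U$ on $\mathbb N$; $x_n=O_{\mathcal U}(y_n)$ means $x_n\le Cy_n$ for all $n$ in a set belonging to $\mathcal U$, for some constant $C$. Let $\Gamma=\langle S\mid R\rangle$ be finitely presented ($S,R$ finite, $\mathbb F_S$ free on $S$). For each $k$ fix a unitarily invariant, submultiplicative norm $\|\cdot\|$ on $\mathrm M_k(\mathbb C)$. For $\varphi\colon S\to\mathrm U(k)$ (extended to $\mathbb F_S$), $\mathrm{def}(\varphi)=\max_{r\in R}\|\varphi(r)-1_k\|$. Let $\varphi_n\colon S\to\mathrm U(k_n)$ with $\lim_{n\to\mathcal U}\mathrm{def}(\varphi_n)=0$. Let $\mathrm M_{\mathcal U}$ be the Banach space of bounded sequences $(T_n)$, $T_n\in\mathrm M_{k_n}(\mathbb C)$, modulo those with $\lim_{n\to\mathcal U}\|T_n\|=0$, and $\mathrm U_{\mathcal U}$ the group $\prod_n\mathrm U(k_n)$ modulo the normal subgroup of sequences with $\lim_{n\to\mathcal U}\|u_n-1_{k_n}\|=0$;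 $\mathrm U_{\mathcal U}$ acts isometrically on $\mathrm M_{\mathcal U}$ by left and right multiplication. The $\varphi_n$ induce a homomorphism $\varphi_{\mathcal U}\colon\Gamma\to\mathrm U_{\mathcal U}$ sending $g$ to the class of $(\varphi_n(w))_n$ for any $w\in\mathbb F_S$ representing $g$. Fix a section $\sigma\colon\Gamma\to\mathbb F_S$ of the canonical surjection and maps $\tilde\varphi_n\colon\Gamma\to\mathrm U(k_n)$ with $\tilde\varphi_n(1_\Gamma)=1$, $\tilde\varphi_n(g^{-1})=\tilde\varphi_n(g)^*$, $\|\varphi_n(\sigma(g))-\tilde\varphi_n(g)\|=O_{\mathcal U}(\mathrm{def}(\varphi_n))$ for all $g$. Let $c_n(g,h)=(\tilde\varphi_n(g)\tilde\varphi_n(h)-\tilde\varphi_n(gh))/\mathrm{def}(\varphi_n)$ if $\mathrm{def}(\varphi_n)>0$, else $0$; each sequence $(c_n(g,h))_n$ is $O_{\mathcal U}(1)$-bounded and $c(g,h)\in\mathrm M_{\mathcal U}$ denotes its class. *)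

(* Defs.v *)
From mathcomp Require Import all_boot all_order all_algebra.
From mathcomp Require Import reals complex.

Set Implicit Arguments.
Unset Strict Implicit.
Unset Printing Implicit Defensive.

Import Order.TTheory GRing.Theory Num.Theory.
Local Open Scope ring_scope.

Definition nonprincipal_ultrafilter (U : (nat -> Prop) -> Prop) : Prop :=
  U (fun _ => True) /\
  ~ U (fun _ => False) /\
  (forall A B : nat -> Prop, (forall n, A n -> B n) -> U A -> U B) /\
  (forall A B : nat -> Prop, U A -> U B -> U (fun n => A n /\ B n)) /\
  (forall A : nat -> Prop, U A \/ U (fun n => ~ A n)) /\
  (forall m : nat, ~ U (fun n => n = m)).

Definition Ulim0 {R : realType} (U : (nat -> Prop) -> Prop) (x : nat -> R) : Prop :=
  forall eps : R, 0 < eps -> U (fun n => `|x n| < eps).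

Definition bigO_U {R : realType} (U : (nat -> Prop) -> Prop) (x y : nat -> R) : Prop :=
  exists C : R, U (fun n => x n <= C * y n).

(* Words in the free group F_S (letter (s,false) = s, (s,true) = s^-1)  *)

Definition word (S : finType) := seq (S * bool).

Definition inv_letter (S : finType) (x : S * bool) : S * bool := (x.1, ~~ x.2).

Inductive elem_move (S : finType) (Rel : seq (word S)) : word S -> word S -> Prop :=
  | em_free : forall (u v : word S) (x : S * bool),
      elem_move Rel (u ++ [:: x; inv_letter x] ++ v) (u ++ v)
  | em_rel : forall (u v r : word S), r \in Rel ->
      elem_move Rel (u ++ r ++ v) (u ++ v).

(* equivalence relation generated by the elementary moves: two words are
   related iff they define the same element of <S | Rel> *)
Inductive rel_equiv (S : finType) (Rel : seq (word S)) : word S -> word S -> Prop :=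
  | re_refl : forall u, rel_equiv Rel u u
  | re_move : forall u v, elem_move Rel u v -> rel_equiv Rel u v
  | re_sym : forall u v, rel_equiv Rel u v -> rel_equiv Rel v u
  | re_trans : forall u v w, rel_equiv Rel u v -> rel_equiv Rel v w -> rel_equiv Rel u w.

Definition group_axioms (G : Type) (mul : G -> G -> G) (one : G) (inv : G -> G) : Prop :=
  [/\ (forall x y z, mul x (mul y z) = mul (mul x y) z),
      (forall x, mul one x = x), (forall x, mul x one = x),
      (forall x, mul (inv x) x = one) & (forall x, mul x (inv x) = one)].

Definition eval_word (S : finType) (G : Type) (mul : G -> G -> G) (one : G)
  (inv : G -> G) (gen : S -> G) (w : word S) : G :=
  foldr (fun x acc => mul (if x.2 then inv (gen x.1) else gen x.1) acc) one w.

Definition is_presentation (S : finType) (Rel : seq (word S)) (G : Type)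
  (mul : G -> G -> G) (one : G) (inv : G -> G) (gen : S -> G) : Prop :=
  (forall g : G, exists w : word S, eval_word mul one inv gen w = g) /\
  (forall u v : word S,
     eval_word mul one inv gen u = eval_word mul one inv gen v <-> rel_equiv Rel u v).

Local Open Scope complex_scope.

Definition mxadj {R : realType} {k : nat} (A : 'M[R[i]]_k) : 'M[R[i]]_k :=
  (map_mx conjc A)^T.

Definition unitary {R : realType} {k : nat} (A : 'M[R[i]]_k) : Prop :=
  A *m mxadj A = 1%:M /\ mxadj A *m A = 1%:M.

Definition ui_submult_norm {R : realType} (k : nat) (nrm : 'M[R[i]]_k -> R) : Prop :=
  (forall A, 0 <= nrm A) /\
  (forall A, nrm A = 0 -> A = 0) /\
  (forall A B, nrm (A + B) <= nrm A + nrm B) /\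
  (forall (a : R[i]) A, (nrm (a *: A))%:C = `|a| * (nrm A)%:C) /\
  (forall A B, nrm (A *m B) <= nrm A * nrm B) /\
  (forall U V A, unitary U -> unitary V -> nrm (U *m A *m V) = nrm A).

Definition word_mx {R : realType} {S : finType} {k : nat}
  (phi : S -> 'M[R[i]]_k) (w : word S) : 'M[R[i]]_k :=
  foldr (fun x acc => (if x.2 then mxadj (phi x.1) else phi x.1) *m acc) 1%:M w.

Definition defect {R : realType} {S : finType} {k : nat}
  (nrm : 'M[R[i]]_k -> R) (Rel : seq (word S)) (phi : S -> 'M[R[i]]_k) : R :=
  \big[Num.max/0]_(r <- Rel) nrm (word_mx phi r - 1%:M).

Definition cmx {R : realType} {k : nat} (d : R) (a b ab : 'M[R[i]]_k) : 'M[R[i]]_k :=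
  if 0 < d then (d^-1)%:C *: (a *m b - ab) else 0.

(* Main.v *)
Require Import Defs.
From mathcomp Require Import all_boot all_order all_algebra.
From mathcomp Require Import reals complex.
From mathcomp Require Import ring lra.
Set Implicit Arguments.
Unset Strict Implicit.
Import Order.TTheory GRing.Theory Num.Theory.
Local Open Scope ring_scope.
Local Open Scope complex_scope.


Lemma adjM (R : realType) (m : nat) (A B : 'M[R[i]]_m) :
  mxadj (A *m B) = mxadj B *m mxadj A.
Proof. by rewrite /mxadj map_mxM trmx_mul. Qed.

Lemma adj1 (R : realType) (m : nat) : mxadj (1%:M : 'M[R[i]]_m) = 1%:M.
Proof. by rewrite /mxadj map_scalar_mx tr_scalar_mx; congr (_%:M); exact: conjc1. Qed.

Lemma adjK (R : realType) (m : nat) (A : 'M[R[i]]_m) : mxadj (mxadj A) = A.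
Proof.
rewrite /mxadj map_trmx trmxK -map_mx_comp.
by apply/matrixP=> i j; rewrite !mxE /=; exact: conjcK.
Qed.

Lemma unitary1 (R : realType) (m : nat) : unitary (1%:M : 'M[R[i]]_m).
Proof. by rewrite /unitary adj1 mulmx1. Qed.

Lemma unitary_adj (R : realType) (m : nat) (A : 'M[R[i]]_m) :
  unitary A -> unitary (mxadj A).
Proof. by case=> h1 h2; split; rewrite adjK. Qed.

Lemma unitary_mul (R : realType) (m : nat) (A B : 'M[R[i]]_m) :
  unitary A -> unitary B -> unitary (A *m B).
Proof.
case=> a1 a2 [b1 b2]; rewrite /unitary adjM; split.
  by rewrite mulmxA -(mulmxA A) b1 mulmx1 a1.
by rewrite mulmxA -(mulmxA _ _ A) a2 mulmx1 b2.
Qed.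


Lemma cinj (R : realType) (x y : R) : x%:C = y%:C -> x = y.
Proof. by case. Qed.

Lemma nrm_scale (R : realType) (m : nat) (nrm : 'M[R[i]]_m -> R)
  (Hn : ui_submult_norm nrm) (x : R) (A : 'M[R[i]]_m) :
  0 <= x -> nrm (x%:C *: A) = x * nrm A.
Proof.
move=> x0; case: Hn => _ [_ [_ [hs _]]].
apply: cinj; rewrite hs ger0_norm ?lecR //.
by rewrite -rmorphM.
Qed.

Lemma nrm0 (R : realType) (m : nat) (nrm : 'M[R[i]]_m -> R)
  (Hn : ui_submult_norm nrm) : nrm 0 = 0.
Proof. by have := nrm_scale Hn (0 : 'M[R[i]]_m) (lexx (0:R)); rewrite scaler0 mul0r. Qed.

Lemma nrmN (R : realType) (m : nat) (nrm : 'M[R[i]]_m -> R)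
  (Hn : ui_submult_norm nrm) (A : 'M[R[i]]_m) : nrm (- A) = nrm A.
Proof.
case: Hn => _ [_ [_ [hs _]]].
apply: cinj; rewrite -scaleN1r hs normrN normr1 mul1r //.
Qed.

Lemma nrmB (R : realType) (m : nat) (nrm : 'M[R[i]]_m -> R)
  (Hn : ui_submult_norm nrm) (A B : 'M[R[i]]_m) : nrm (A - B) = nrm (B - A).
Proof. by rewrite -(nrmN Hn) opprB. Qed.

Lemma nrmD (R : realType) (m : nat) (nrm : 'M[R[i]]_m -> R)
  (Hn : ui_submult_norm nrm) (A B : 'M[R[i]]_m) : nrm (A + B) <= nrm A + nrm B.
Proof. by case: Hn => _ [_ [h _]]. Qed.

Lemma nrmBB (R : realType) (m : nat) (nrm : 'M[R[i]]_m -> R)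
  (Hn : ui_submult_norm nrm) (A B : 'M[R[i]]_m) : nrm (A - B) <= nrm A + nrm B.
Proof. by rewrite -(nrmN Hn B) nrmD. Qed.

Lemma nrm_ge0 (R : realType) (m : nat) (nrm : 'M[R[i]]_m -> R)
  (Hn : ui_submult_norm nrm) (A : 'M[R[i]]_m) : 0 <= nrm A.
Proof. by case: Hn. Qed.

Lemma nrmM (R : realType) (m : nat) (nrm : 'M[R[i]]_m -> R)
  (Hn : ui_submult_norm nrm) (A B : 'M[R[i]]_m) : nrm (A *m B) <= nrm A * nrm B.
Proof. by case: Hn => _ [_ [_ [_ [h _]]]]. Qed.

Lemma nrmMu (R : realType) (m : nat) (nrm : 'M[R[i]]_m -> R)
  (Hn : ui_submult_norm nrm) (A V : 'M[R[i]]_m) : unitary V -> nrm (A *m V) = nrm A.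
Proof.
move=> hV; case: Hn => _ [_ [_ [_ [_ h]]]].
by rewrite -{1}(mul1mx A) h //; exact: unitary1.
Qed.

Lemma nrmuM (R : realType) (m : nat) (nrm : 'M[R[i]]_m -> R)
  (Hn : ui_submult_norm nrm) (A V : 'M[R[i]]_m) : unitary V -> nrm (V *m A) = nrm A.
Proof.
move=> hV; case: Hn => _ [_ [_ [_ [_ h]]]].
by rewrite -(mulmx1 (V *m A)) h //; exact: unitary1.
Qed.


Lemma word_mx_cat (R : realType) (S : finType) (m : nat) (phi : S -> 'M[R[i]]_m)
  (u v : word S) : word_mx phi (u ++ v) = word_mx phi u *m word_mx phi v.
Proof.
elim: u => [|x u IH] /=; first by rewrite /word_mx /= mul1mx.
by rewrite /word_mx /= -/(word_mx phi (u ++ v)) IH mulmxA.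
Qed.

Lemma word_unitary (R : realType) (S : finType) (m : nat) (phi : S -> 'M[R[i]]_m)
  (Hphi : forall s, unitary (phi s)) (w : word S) : unitary (word_mx phi w).
Proof.
elim: w => [|x w IH]; first exact: unitary1.
rewrite /word_mx /= -/(word_mx phi w); apply: unitary_mul => //.
by case: x.2; [apply: unitary_adj|]; apply: Hphi.
Qed.

Lemma defect_ge0 (R : realType) (S : finType) (m : nat) (nrm : 'M[R[i]]_m -> R)
  (Rel : seq (word S)) (phi : S -> 'M[R[i]]_m) : 0 <= defect nrm Rel phi.
Proof.
rewrite /defect; elim: Rel => [|r Rel IH]; first by rewrite big_nil.
by rewrite big_cons le_max IH orbT.
Qed.

Lemma defect_le (R : realType) (S : finType) (m : nat) (nrm : 'M[R[i]]_m -> R)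
  (Rel : seq (word S)) (phi : S -> 'M[R[i]]_m) r : r \in Rel ->
  nrm (word_mx phi r - 1%:M) <= defect nrm Rel phi.
Proof.
move=> hr; rewrite /defect.
exact: (le_bigmax_seq 0 r predT (fun r => nrm (word_mx phi r - 1%:M)) hr).
Qed.

Lemma eval_cat (S : finType) (G : Type) (mul : G -> G -> G) (one : G) (inv : G -> G)
  (HG : group_axioms mul one inv) (gen : S -> G) (u v : word S) :
  eval_word mul one inv gen (u ++ v) =
  mul (eval_word mul one inv gen u) (eval_word mul one inv gen v).
Proof.
case: HG => hA h1 _ _ _.
elim: u => [|x u IH] /=; first by rewrite /eval_word /= h1.
by rewrite /eval_word /= -!/(eval_word mul one inv gen _) IH hA.
Qed.

Lemma rel_bound (S : finType) (Rel : seq (word S)) (u v : word S) :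
  rel_equiv Rel u v -> exists N : nat, forall (R : realType) (m : nat)
    (nrm : 'M[R[i]]_m -> R) (phi : S -> 'M[R[i]]_m),
    ui_submult_norm nrm -> (forall s, unitary (phi s)) ->
    nrm (word_mx phi u - word_mx phi v) <= N%:R * defect nrm Rel phi.
Proof.
elim=> {u v}.
- move=> u; exists 0%N => R m nrm phi Hn _.
  by rewrite subrr (nrm0 Hn) mul0r.
- move=> u v []; last first.
    move=> u0 v0 r hr; exists 1%N => R m nrm phi Hn Hphi.
    rewrite !word_mx_cat mul1r.
    have -> : word_mx phi u0 *m (word_mx phi r *m word_mx phi v0) -
      word_mx phi u0 *m word_mx phi v0 =
      word_mx phi u0 *m (word_mx phi r - 1%:M) *m word_mx phi v0.
      by rewrite mulmxBr mulmxBl mulmx1 !mulmxA.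
    rewrite (nrmMu Hn _ (word_unitary Hphi _)).
    rewrite (nrmuM Hn _ (word_unitary Hphi _)).
    exact: defect_le.
  move=> u0 v0 [s b]; exists 0%N => R m nrm phi Hn Hphi.
  rewrite !word_mx_cat.
  have -> : word_mx phi [:: (s, b); inv_letter (s, b)] = 1%:M.
    rewrite /word_mx /= mulmx1.
    by case: b (Hphi s) => -[h1 h2] /=.
  by rewrite mul1mx subrr (nrm0 Hn) mul0r.
- move=> u v _ [N hN]; exists N => R m nrm phi Hn Hphi.
  by rewrite (nrmB Hn) hN.
- move=> u v w _ [N1 h1] _ [N2 h2]; exists (N1 + N2)%N => R m nrm phi Hn Hphi.
  rewrite -(subrKA (word_mx phi v)) natrD mulrDl.
  apply: le_trans (nrmD Hn _ _) _.
  by apply: lerD; [apply: h1|apply: h2].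
Qed.


Lemma zL1 (V : zmodType) (a b c d : V) : (a - b) - (c - d) = (a - c) - (b - d).
Proof. by rewrite !opprD !opprK addrACA. Qed.
Lemma zL2 (V : zmodType) (a b c d : V) : (a - b) + (c - d) = (a + c) - (b + d).
Proof. by rewrite addrACA opprD. Qed.
Lemma zcocyc (V : zmodType) (Z1 Z2 Z3 Z4 P o : V) :
  (Z1 - o) - (Z2 - o) + (Z3 - o) - (Z4 - o) = ((P - Z4) - (Z2 - o)) - ((P - Z1) - (Z3 - o)).
Proof.
have hL : (Z1 - o) - (Z2 - o) + (Z3 - o) - (Z4 - o) = (Z1 + Z3) - (Z2 + Z4).
  rewrite (@zL1 V Z1 o Z2 o) subrr subr0 addrA.
  rewrite (@zL1 V (Z1 - Z2 + Z3) o Z4 o) subrr subr0.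
  by rewrite (addrAC Z1) opprD addrA.
have hR : ((P - Z4) - (Z2 - o)) - ((P - Z1) - (Z3 - o)) = (Z1 + Z3) - (Z2 + Z4).
  rewrite (@zL1 V (P - Z4) (Z2 - o) (P - Z1) (Z3 - o)).
  rewrite (@zL1 V P Z4 P Z1) subrr sub0r (@zL1 V Z2 o Z3 o) subrr subr0.
  by rewrite (opprB Z4) (opprB Z2) zL2 (addrC Z4).
by rewrite hL hR.
Qed.
Lemma zTel (V : zmodType) (x y z w : V) : (x - y) + (y - z) + (z - w) = x - w.
Proof. by rewrite !addrA !subrK. Qed.

Lemma Fprime_eq (R : realType) (m : nat) (ag ah al agh ahl am : 'M[R[i]]_m) :
  unitary ag -> unitary agh -> unitary ahl -> unitary am ->
  ag *m ((ah *m al - ahl) *m mxadj ahl) *m mxadj ag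
  - (agh *m al - am) *m mxadj am + (ag *m ahl - am) *m mxadj am
  - (ag *m ah - agh) *m mxadj agh =
  ((ag *m ah - agh) *m mxadj agh) *m ((agh *m al - am) *m mxadj am)
  - (ag *m ((ah *m al - ahl) *m mxadj ahl) *m mxadj ag) *m ((ag *m ahl - am) *m mxadj am).
Proof.
move=> [g1 g2] [gh1 gh2] [hl1 hl2] [m1 m2].
have hW4 : (ag *m ah - agh) *m mxadj agh = ag *m ah *m mxadj agh - 1%:M.
  by rewrite mulmxBl gh1.
have hW2 : (agh *m al - am) *m mxadj am = agh *m al *m mxadj am - 1%:M.
  by rewrite mulmxBl m1.
have hW3 : (ag *m ahl - am) *m mxadj am = ag *m ahl *m mxadj am - 1%:M.
  by rewrite mulmxBl m1.
have hW1 : ag *m ((ah *m al - ahl) *m mxadj ahl) *m mxadj ag =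
    ag *m (ah *m al *m mxadj ahl) *m mxadj ag - 1%:M.
  by rewrite mulmxBl hl1 mulmxBr mulmxBl mulmx1 g1.
have hprod : (ag *m ah *m mxadj agh) *m (agh *m al *m mxadj am) =
   (ag *m (ah *m al *m mxadj ahl) *m mxadj ag) *m (ag *m ahl *m mxadj am).
  rewrite !mulmxA -(mulmxA _ (mxadj agh) agh) gh2 mulmx1.
  rewrite -(mulmxA _ (mxadj ag) ag) g2 mulmx1.
  by rewrite -(mulmxA _ (mxadj ahl) ahl) hl2 mulmx1.
rewrite hW1 hW2 hW3 hW4 !mulmxBl !mulmxBr !mul1mx !mulmx1 hprod.
exact: zcocyc.
Qed.


Lemma scale_eq (R : realType) (m : nat) (s : R[i]) (pg phl pm pgh B1 B2 B3 B4 : 'M[R[i]]_m) :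
  pg *m ((s *: B1) *m mxadj phl) *m mxadj pg - (s *: B2) *m mxadj pm
  + (s *: B3) *m mxadj pm - (s *: B4) *m mxadj pgh =
  s *: (pg *m (B1 *m mxadj phl) *m mxadj pg - B2 *m mxadj pm
  + B3 *m mxadj pm - B4 *m mxadj pgh).
Proof.
by rewrite !scalerBr !scalerDr !scalerN -!scalemxAl -scalemxAr -scalemxAl.
Qed.

Lemma adj_diff (R : realType) (m : nat) (nrm : 'M[R[i]]_m -> R)
  (Hn : ui_submult_norm nrm) (B p a : 'M[R[i]]_m) :
  unitary p -> unitary a ->
  nrm (B *m (mxadj p - mxadj a)) <= nrm B * nrm (p - a).
Proof.
move=> hp ha.
have -> : mxadj p - mxadj a = mxadj p *m (a - p) *m mxadj a.
  by rewrite mulmxBr mulmxBl -mulmxA ha.1 mulmx1 hp.2 mul1mx.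
rewrite mulmxA (nrmMu Hn _ (unitary_adj ha)) mulmxA.
apply: le_trans (nrmM Hn _ _) _.
by rewrite (nrmMu Hn _ (unitary_adj hp)) (nrmB Hn a).
Qed.

Lemma T1_bound (R : realType) (m : nat) (nrm : 'M[R[i]]_m -> R)
  (Hn : ui_submult_norm nrm) (B p q a b : 'M[R[i]]_m) :
  unitary p -> unitary q -> unitary a -> unitary b ->
  nrm (p *m (B *m mxadj q) *m mxadj p - a *m (B *m mxadj b) *m mxadj a)
   <= nrm B * nrm (p - a) + nrm B * nrm (q - b) + nrm B * nrm (p - a).
Proof.
move=> hp hq ha hb.
have -> : p *m (B *m mxadj q) *m mxadj p - a *m (B *m mxadj b) *m mxadj a =
  (p - a) *m (B *m mxadj q) *m mxadj p + a *m (B *m (mxadj q - mxadj b)) *m mxadj p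
  + a *m (B *m mxadj b) *m (mxadj p - mxadj a).
  by rewrite !(mulmxBl, mulmxBr) zTel.

apply: (le_trans (nrmD Hn _ _)); apply: lerD; last first.
  rewrite -mulmxA (nrmuM Hn _ ha).
  apply: le_trans (@adj_diff _ _ _ Hn (B *m mxadj b) p a hp ha) _.
  by rewrite (nrmMu Hn _ (unitary_adj hb)).
apply: (le_trans (nrmD Hn _ _)); apply: lerD.
  rewrite (nrmMu Hn _ (unitary_adj hp)).
  apply: le_trans (nrmM Hn _ _) _.
  by rewrite (nrmMu Hn _ (unitary_adj hq)) mulrC.
rewrite (nrmMu Hn _ (unitary_adj hp)) (nrmuM Hn _ ha).
exact: adj_diff.
Qed.


Lemma zmod4 (V : zmodType) (x1 x2 x3 x4 y1 y2 y3 y4 : V) :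
 (x1 - x2 + x3 - x4) - (y1 - y2 + y3 - y4) = (x1 - y1) - (x2 - y2) + (x3 - y3) - (x4 - y4).
Proof. by rewrite zL1 -(@zL2 V (x1 - x2) (y1 - y2)) (@zL1 V x1 x2 y1 y2). Qed.

Lemma pointwise (R : realType) (m : nat) (nrm : 'M[R[i]]_m -> R)
  (Hn : ui_submult_norm nrm) (D K : R)
  (ag ah al agh ahl am pg phl pgh pm : 'M[R[i]]_m) :
  unitary ag -> unitary agh -> unitary ahl -> unitary am ->
  unitary pg -> unitary phl -> unitary pgh -> unitary pm ->
  0 < D -> 0 <= K ->
  nrm (ah *m al - ahl) <= K * D -> nrm (agh *m al - am) <= K * D ->
  nrm (ag *m ahl - am) <= K * D -> nrm (ag *m ah - agh) <= K * D ->
  nrm (pg - ag) <= K * D -> nrm (phl - ahl) <= K * D ->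
  nrm (pgh - agh) <= K * D -> nrm (pm - am) <= K * D ->
  nrm (pg *m (cmx D ah al ahl *m mxadj phl) *m mxadj pg
       - cmx D agh al am *m mxadj pm + cmx D ag ahl am *m mxadj pm
       - cmx D ag ah agh *m mxadj pgh) <= 8%:R * (K * K) * D.
Proof.
move=> ug ugh uhl um vg vhl vgh vm hD hK hB1 hB2 hB3 hB4 e1 e2 e3 e4.
rewrite /cmx hD scale_eq (nrm_scale Hn); last by rewrite invr_ge0 ltW.
set B1 := ah *m al - ahl; set B2 := agh *m al - am.
set B3 := ag *m ahl - am; set B4 := ag *m ah - agh.
set F := _ - _ + _ - _.
set F' := ag *m (B1 *m mxadj ahl) *m mxadj ag - B2 *m mxadj am
  + B3 *m mxadj am - B4 *m mxadj agh.
set c := K * D.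
have hc : 0 <= c by rewrite /c mulr_ge0 // ltW.
have P : forall x y, 0 <= x -> 0 <= y -> x <= c -> y <= c -> x * y <= c * c.
  by move=> x y hx hy hxc hyc; apply: ler_pM.
have n0 := nrm_ge0 Hn.
have hF' : nrm F' <= c * c + c * c.
  rewrite /F' Fprime_eq //.
  apply: le_trans (nrmBB Hn _ _) _; apply: lerD.
    apply: le_trans (nrmM Hn _ _) _.
    rewrite (nrmMu Hn _ (unitary_adj ugh)) (nrmMu Hn _ (unitary_adj um)).
    exact: P.
  apply: le_trans (nrmM Hn _ _) _.
  rewrite (nrmMu Hn _ (unitary_adj ug)) (nrmuM Hn _ ug).
  rewrite (nrmMu Hn _ (unitary_adj uhl)) (nrmMu Hn _ (unitary_adj um)).
  exact: P.
have hT : nrm (F - F') <= 6%:R * (c * c).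
  rewrite /F /F' zmod4.
  apply: le_trans (nrmBB Hn _ _) _.
  have t1 := T1_bound Hn B1 vg vhl ug uhl.
  have t2 : nrm (B2 *m mxadj pm - B2 *m mxadj am) <= nrm B2 * nrm (pm - am).
    by rewrite -mulmxBr; apply: adj_diff.
  have t3 : nrm (B3 *m mxadj pm - B3 *m mxadj am) <= nrm B3 * nrm (pm - am).
    by rewrite -mulmxBr; apply: adj_diff.
  have t4 : nrm (B4 *m mxadj pgh - B4 *m mxadj agh) <= nrm B4 * nrm (pgh - agh).
    by rewrite -mulmxBr; apply: adj_diff.
  have s1 := nrmD Hn (pg *m (B1 *m mxadj phl) *m mxadj pg - ag *m (B1 *m mxadj ahl) *m mxadj ag -
          (B2 *m mxadj pm - B2 *m mxadj am)) (B3 *m mxadj pm - B3 *m mxadj am).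
  have s2 := nrmBB Hn (pg *m (B1 *m mxadj phl) *m mxadj pg - ag *m (B1 *m mxadj ahl) *m mxadj ag)
          (B2 *m mxadj pm - B2 *m mxadj am).
  have p1 := P _ _ (n0 B1) (n0 (pg - ag)) hB1 e1.
  have p2 := P _ _ (n0 B1) (n0 (phl - ahl)) hB1 e2.
  have p3 := P _ _ (n0 B2) (n0 (pm - am)) hB2 e4.
  have p4 := P _ _ (n0 B3) (n0 (pm - am)) hB3 e4.
  have p5 := P _ _ (n0 B4) (n0 (pgh - agh)) hB4 e3.
  lra.
have hF : nrm F <= 8%:R * (c * c).
  rewrite -(subrK F' F).
  apply: le_trans (nrmD Hn _ _) _; lra.
have hDi : 0 <= D^-1 by rewrite invr_ge0 ltW.
apply: le_trans (ler_wpM2l hDi hF) _.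
rewrite /c le_eqVlt; apply/orP; left; apply/eqP.
field; exact: lt0r_neq0.
Qed.


Unset Implicit Arguments.
Set Strict Implicit.

Theorem corollary3p2
  (R : realType)
  (U : (nat -> Prop) -> Prop) (HU : nonprincipal_ultrafilter U)
  (S : finType) (Rel : seq (word S))
  (G : Type) (mulG : G -> G -> G) (oneG : G) (invG : G -> G)
  (HG : group_axioms mulG oneG invG)
  (gen : S -> G) (Hpres : is_presentation Rel mulG oneG invG gen)
  (nrm : forall m : nat, 'M[R[i]]_m -> R)
  (Hnrm : forall m : nat, ui_submult_norm (nrm m))
  (k : nat -> nat)
  (phi : forall n : nat, S -> 'M[R[i]]_(k n))
  (Hphi : forall n (s : S), unitary (phi n s))
  (Hdef : Ulim0 U (fun n => defect (nrm (k n)) Rel (phi n)))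
  (sigma : G -> word S)
  (Hsigma : forall g : G, eval_word mulG oneG invG gen (sigma g) = g)
  (psi : forall n : nat, G -> 'M[R[i]]_(k n))
  (Hpsi_unit : forall n g, unitary (psi n g))
  (Hpsi1 : forall n, psi n oneG = 1%:M)
  (Hpsi_inv : forall n g, psi n (invG g) = mxadj (psi n g))
  (Hpsi_close : forall g : G,
     bigO_U U (fun n => nrm (k n) (word_mx (phi n) (sigma g) - psi n g))
              (fun n => defect (nrm (k n)) Rel (phi n))) :
  let c n g h := cmx (defect (nrm (k n)) Rel (phi n))
                     (psi n g) (psi n h) (psi n (mulG g h)) in
  (* representative of phi_U(g) *)
  let phiU n g := word_mx (phi n) (sigma g) in
  (* representative of alpha(g,h) = c(g,h) phi_U(gh)^* *)
  let alpha n g h := c n g h *m mxadj (phiU n (mulG g h)) in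
  (* representative of pi(g) T = phi_U(g) T phi_U(g)^* *)
  let pi n g (T : 'M[R[i]]_(k n)) := phiU n g *m T *m mxadj (phiU n g) in
  forall g h l : G,
    Ulim0 U (fun n => nrm (k n)
      (pi n g (alpha n h l) - alpha n (mulG g h) l
       + alpha n g (mulG h l) - alpha n g h)).
Proof.
move=> c phiU alpha pi g h l eps heps.
case: HU => HUT [HUF [HUmono [HUinter _]]].
case: (HG) => hassoc _ _ _ _.
have hd0 : forall n, 0 <= defect (nrm (k n)) Rel (phi n) by move=> n; exact: defect_ge0.
have Eb : forall x, exists C, U (fun n => nrm (k n) (word_mx (phi n) (sigma x) - psi n x)
     <= C * defect (nrm (k n)) Rel (phi n)).
  by move=> x; case: (Hpsi_close x) => C hC; exists C.
have Bb : forall x y, exists C, U (fun n => nrm (k n) (psi n x *m psi n y - psi n (mulG x y))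
     <= C * defect (nrm (k n)) Rel (phi n)).
  move=> x y.
  have hrel : rel_equiv Rel (sigma x ++ sigma y) (sigma (mulG x y)).
    by apply Hpres.2; rewrite (eval_cat HG) !Hsigma.
  case: (rel_bound hrel) => N hN.
  case: (Eb x) => Cx hx; case: (Eb y) => Cy hy; case: (Eb (mulG x y)) => Cxy hxy.
  exists (Cx + Cy + N%:R + Cxy).
  apply: (HUmono _ _ _ (HUinter _ _ hx (HUinter _ _ hy hxy))).
  move=> n [h1 [h2 h3]].
  have hN' := hN R (k n) (nrm (k n)) (phi n) (Hnrm _) (Hphi n).
  rewrite word_mx_cat in hN'.
  set px := word_mx (phi n) (sigma x) in h1 hN' *.
  set py := word_mx (phi n) (sigma y) in h2 hN' *.
  set pxy := word_mx (phi n) (sigma (mulG x y)) in h3 hN' *.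
  have upx : unitary px := word_unitary (Hphi n) _.
  have -> : psi n x *m psi n y - psi n (mulG x y) =
    ((psi n x - px) *m psi n y + px *m (psi n y - py)) + (px *m py - pxy)
    + (pxy - psi n (mulG x y)).
    by rewrite mulmxBl mulmxBr zTel addrA subrK.
  have Hn := Hnrm (k n).
  have t1 := nrmD Hn ((psi n x - px) *m psi n y) (px *m (psi n y - py)).
  have t2 := nrmD Hn ((psi n x - px) *m psi n y + px *m (psi n y - py)) (px *m py - pxy).
  have t3 := nrmD Hn ((psi n x - px) *m psi n y + px *m (psi n y - py) + (px *m py - pxy))
     (pxy - psi n (mulG x y)).
  rewrite (nrmMu Hn _ (Hpsi_unit n y)) (nrmB Hn (psi n x)) (nrmuM Hn _ upx)
     (nrmB Hn (psi n y)) in t1.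
  lra.
have hA := hassoc g h l.
case: (Eb g) => C1 E1; case: (Eb (mulG h l)) => C2 E2.
case: (Eb (mulG g h)) => C3 E3; case: (Eb (mulG (mulG g h) l)) => C4 E4.
case: (Bb h l) => C5 E5; case: (Bb (mulG g h) l) => C6 E6.
case: (Bb g (mulG h l)) => C7 E7; rewrite hA in E7.
case: (Bb g h) => C8 E8.
set K := `|C1| + `|C2| + `|C3| + `|C4| + `|C5| + `|C6| + `|C7| + `|C8|.
have a1 := normr_ge0 C1; have a2 := normr_ge0 C2; have a3 := normr_ge0 C3.
have a4 := normr_ge0 C4; have a5 := normr_ge0 C5; have a6 := normr_ge0 C6.
have a7 := normr_ge0 C7; have a8 := normr_ge0 C8.
have hK : 0 <= K by rewrite /K; lra.
have bnd : forall n C f, f <= C * defect (nrm (k n)) Rel (phi n) -> `|C| <= K ->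
    f <= K * defect (nrm (k n)) Rel (phi n).
  move=> n C f hf hC; apply: (le_trans hf); apply: ler_wpM2r => //.
  exact: le_trans (ler_norm C) hC.
set t := 8%:R * (K * K).
have ht : 0 <= t by rewrite /t mulr_ge0 // mulr_ge0.
have heps' : 0 < eps / (t + 1) by rewrite divr_gt0 //; lra.
have Hd := Hdef _ heps'.
apply: (HUmono _ _ _ (HUinter _ _ Hd (HUinter _ _ E1 (HUinter _ _ E2 (HUinter _ _ E3
   (HUinter _ _ E4 (HUinter _ _ E5 (HUinter _ _ E6 (HUinter _ _ E7 E8))))))))).
move=> n [hd [e1 [e2 [e3 [e4 [b5 [b6 [b7 b8]]]]]]]].
rewrite /pi /alpha /c /phiU hA.
have Hn := Hnrm (k n).
rewrite ger0_norm; last exact: nrm_ge0.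
case: (ltrP 0 (defect (nrm (k n)) Rel (phi n))) => hdn.
  apply: le_lt_trans.
    apply: (pointwise (K:=K) Hn) => //; try exact: word_unitary.
    - by apply: (bnd _ _ _ b5); rewrite /K; lra.
    - by apply: (bnd _ _ _ b6); rewrite /K; lra.
    - by apply: (bnd _ _ _ b7); rewrite /K; lra.
    - by apply: (bnd _ _ _ b8); rewrite /K; lra.
    - by apply: (bnd _ _ _ e1); rewrite /K; lra.
    - by apply: (bnd _ _ _ e2); rewrite /K; lra.
    - by apply: (bnd _ _ _ e3); rewrite /K; lra.
    - by apply: (bnd _ _ _ e4); rewrite /K; lra.
  rewrite -/t.
  have hd' : defect (nrm (k n)) Rel (phi n) < eps / (t + 1).
    by apply: le_lt_trans (ler_norm _) hd.
  have : t * defect (nrm (k n)) Rel (phi n) <= t * (eps / (t + 1)) by apply: ler_wpM2l => //; exact: ltW.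
  have : t * (eps / (t + 1)) < eps.
    rewrite mulrA ltr_pdivrMr; last by lra.
    nra.
  lra.
rewrite /cmx.
have -> : (0 < defect (nrm (k n)) Rel (phi n)) = false by apply/negbTE; rewrite -leNgt.
by rewrite !(mul0mx, mulmx0, subr0, addr0) (nrm0 Hn).
Qed.
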